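(* Let $n\ge 2$, let $R$ be the full, complete rooted binary tree whose leaves are $1,\dots,n$ from left to right, and let $T$ be any full rooted binary tree whose leaves are $1,\dots,n$ from left to right. Let $p,s$ be two distinct nodes of $T$, and let $a,b$ be nodes of $R$ with $a\in X_{I_T(p)}$ and $b\in X_{I_T(s)}$. If $a\preceq_R b$, then $p\preceq_T s$ or $s\preceq_T p$. Moreover, if $a\prec_R b$, then $p\prec_T s$.
   Context: A rooted binary tree is full if every internal node has exactly two children, and complete if all levels are completely filled except possibly the last, where leaves are left-aligned; trees here are ordered (children are left/right), so leaves are read left to right. For a node $x$ of such a tree $T$, $I_T(x)$ denotes the set of leaves of the subtree rooted at $x$; it is an interval of $[n]$. For an interval $I\subseteq[n]$, $X_I$ denotes the (unique) minimum-cardinality set of nodes of $R$ such that the leaf sets $I_R(x)$, $x\in X_I$, partition $I$. In a rooted tree, $u\prec u'$ means $u$ is a strict ancestor of $u'$, and $u\preceq u'$ means $u=u'$ or $u\prec u'$. *)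

(* Defs.v *)
From mathcomp Require Import all_boot.
Set Implicit Arguments. Unset Strict Implicit. Unset Printing Implicit Defensive.

(* Ordered full rooted binary trees: every internal node has exactly two
   children (left, right). Leaves are implicitly labelled 1..nleaves t
   from left to right. *)
Inductive btree : Type := BLeaf | BNode of btree & btree.

Fixpoint nleaves (t : btree) : nat :=
  match t with BLeaf => 1 | BNode l r => nleaves l + nleaves r end.

Fixpoint height (t : btree) : nat :=
  match t with BLeaf => 0 | BNode l r => (maxn (height l) (height r)).+1 end.

(* A node is addressed by its path from the root: false = left, true = right. *)
Fixpoint subtree (t : btree) (p : seq bool) : option btree :=
  match p with
  | [::] => Some t
  | b :: p' => match t with
               | BLeaf => None
               | BNode l r => subtree (if b then r else l) p'
               end
  end.

Definition is_node (t : btree) (p : seq bool) : bool := isSome (subtree t p).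

Fixpoint offset (t : btree) (p : seq bool) : nat :=
  match p, t with
  | b :: p', BNode l r => if b then nleaves l + offset r p' else offset l p'
  | _, _ => 0
  end.

(* I_t(x): labels of the leaves of the subtree rooted at node x *)
Definition leafset (t : btree) (x : seq bool) : seq nat :=
  match subtree t x with
  | Some s => iota (offset t x).+1 (nleaves s)
  | None => [::]
  end.

(* left-to-right position of a path within its level (MSB first) *)
Definition bits_val (p : seq bool) : nat := foldl (fun acc (b : bool) => acc.*2 + b) 0 p.

(* complete: all levels above the last are completely filled, and the nodes
   of the last level are left-aligned *)
Definition complete (t : btree) : Prop :=
  (forall p : seq bool, size p < height t -> is_node t p) /\
  (forall p q : seq bool, size p = height t -> size q = height t ->
     is_node t p -> bits_val q <= bits_val p -> is_node t q).

Definition partitions (R : btree) (I : seq nat) (X : seq (seq bool)) : Prop :=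
  uniq X /\ all (is_node R) X /\ perm_eq (flatten [seq leafset R x | x <- X]) I.

(* a belongs to the minimum-cardinality such set X_I *)
Definition in_X (R : btree) (I : seq nat) (a : seq bool) : Prop :=
  exists X, [/\ partitions R I X, a \in X &
                forall Y, partitions R I Y -> size X <= size Y].

Definition anc_eq (u u' : seq bool) : bool := prefix u u'.
Definition anc_strict (u u' : seq bool) : bool := prefix u u' && (u != u').

(* Main.v *)
Require Import Defs.
From mathcomp Require Import all_boot zify.
Set Implicit Arguments. Unset Strict Implicit. Unset Printing Implicit Defensive.

Definition sz (t : btree) (x : seq bool) : nat :=
  if subtree t x is Some u then nleaves u else 0.

Lemma nleaves_gt0 t : 0 < nleaves t.
Proof. elim: t => //= l IHl r IHr; lia. Qed.

Lemma sz_gt0 t x : is_node t x -> 0 < sz t x.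
Proof. rewrite /is_node /sz; case: subtree => //= u _; exact: nleaves_gt0. Qed.

Lemma node_cons t c x : is_node t (c :: x) ->
  exists l r, t = BNode l r /\ is_node (if c then r else l) x.
Proof. by case: t => //= l r H; exists l, r. Qed.

Lemma sz_cons l r c x : sz (BNode l r) (c :: x) = sz (if c then r else l) x.
Proof. by []. Qed.

Lemma off_cons l r (c : bool) x : offset (BNode l r) (c :: x) =
  (if c then nleaves l + offset r x else offset l x).
Proof. by []. Qed.

Lemma off_nil t : offset t [::] = 0. Proof. by case: t. Qed.
Lemma sz_nil t : sz t [::] = nleaves t. Proof. by case: t. Qed.

Lemma bound t x : is_node t x -> offset t x + sz t x <= nleaves t.
Proof.
elim: x t => [|c x IH] t.
  by rewrite off_nil sz_nil.
move=> /node_cons [l [r [-> H]]]; rewrite sz_cons off_cons /=.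
have := IH _ H; case: c H => /= H; lia.
Qed.

Lemma subtree_cat t p r : subtree t (p ++ r) =
  if subtree t p is Some u then subtree u r else None.
Proof. elim: p t => [|c p IH] [|l rr] //=. Qed.

Lemma node_prefix t p r : is_node t (p ++ r) -> is_node t p.
Proof. by rewrite /is_node subtree_cat; case: subtree. Qed.

Lemma nest t p r : is_node t (p ++ r) ->
  [/\ offset t p <= offset t (p ++ r),
      offset t (p ++ r) + sz t (p ++ r) <= offset t p + sz t p &
      (r != [::] -> sz t (p ++ r) < sz t p)].
Proof.
elim: p t => [|c p IH] t /=.
  move=> H; have := bound H.
  rewrite off_nil sz_nil => b0; split => //.
  case: r H b0 => [|c r] // /node_cons [l [rr [-> H]]] _ _.
  rewrite sz_cons /=;  have := bound H.
  have := nleaves_gt0 l; have := nleaves_gt0 rr; case: c H => /= H; lia.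
move=> /node_cons [l [rr [-> H]]]; rewrite !sz_cons !off_cons.
have [h1 h2 h3] := IH _ H; split => //; case: c {H h3} h1 h2 => /= h1 h2; lia.
Qed.

Lemma disj t p q : is_node t p -> is_node t q -> ~~ prefix p q -> ~~ prefix q p ->
  offset t p + sz t p <= offset t q \/ offset t q + sz t q <= offset t p.
Proof.
elim: p t q => [|c p IH] t [|d q] // Hp Hq; rewrite !prefix_cons.
have [l [r [Et Hp']]] := node_cons Hp; have [l' [r' [Et' Hq']]] := node_cons Hq.
rewrite Et in Et'; case: Et' => ? ?; subst.
rewrite !sz_cons !off_cons.
have b1 := bound Hp'; have b2 := bound Hq'.
case: c d Hp Hq Hp' Hq' b1 b2 => [] [] _ _ Hp' Hq' b1 b2 /=; rewrite ?andbT ?andbF //= => n1 n2;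
  try (have := IH _ _ Hp' Hq' n1 n2); lia.
Qed.

Lemma mem_leafset t x i : is_node t x ->
  (i \in leafset t x) = (offset t x < i <= offset t x + sz t x).
Proof.
rewrite /is_node /leafset /sz; case: subtree => // u _.
by rewrite mem_iota; apply/idP/idP; lia.
Qed.

Lemma leafset_uniq t x : uniq (leafset t x).
Proof. by rewrite /leafset; case: subtree => // u; exact: iota_uniq. Qed.

Lemma size_leafset t x : size (leafset t x) = sz t x.
Proof. by rewrite /leafset /sz; case: subtree => // u; rewrite size_iota. Qed.

Lemma sub_prefix t u v : is_node t v -> prefix u v ->
  {subset leafset t v <= leafset t u}.
Proof.
move=> nv /prefixP [r E]; subst v => i.
have nu := node_prefix nv; have [h1 h2 _] := nest nv.
rewrite !mem_leafset // => /andP [x1 x2]; apply/andP; split; [apply: leq_ltn_trans h1 x1 | exact: leq_trans x2 h2].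
Qed.

Lemma inter_prefix t u v i : is_node t u -> is_node t v ->
  i \in leafset t u -> i \in leafset t v -> prefix u v || prefix v u.
Proof.
move=> nu nv; rewrite !mem_leafset //.
case: (boolP (prefix u v)) => //= n1; case: (boolP (prefix v u)) => //= n2.
have := disj nu nv n1 n2; lia.
Qed.

Lemma strict_sz t u v : is_node t v -> prefix u v -> u != v -> sz t v < sz t u.
Proof.
move=> nv /prefixP [r E]; subst v => ne.
have [_ _ h] := nest nv; apply: h; apply: contraNneq ne => ->; by rewrite cats0.
Qed.

Lemma prefix_size (u v : seq bool) : prefix u v -> size u <= size v.
Proof. by move/prefixP => [r ->]; rewrite size_cat leq_addr. Qed.

Lemma prefix_anti (u v : seq bool) : prefix u v -> prefix v u -> u = v.
Proof.
move=> uv vu; have := prefix_size uv; have := prefix_size vu => s1 s2.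
move: uv; rewrite prefixE take_oversize ?(eqP _) //; first by move/eqP.
Qed.

Lemma part_sub R I X x : partitions R I X -> x \in X -> {subset leafset R x <= I}.
Proof.
move=> [_ [_ pe]] xX i Hi; rewrite -(perm_mem pe); apply/flatten_mapP; by exists x.
Qed.

Lemma part_cover R I X i : partitions R I X -> i \in I ->
  exists2 y, y \in X & i \in leafset R y.
Proof. by move=> [_ [_ pe]]; rewrite -(perm_mem pe) => /flatten_mapP. Qed.

Lemma flatten_disj (S T : eqType) (f : S -> seq T) (X : seq S) x y i :
  uniq X -> uniq (flatten (map f X)) -> x \in X -> y \in X ->
  i \in f x -> i \in f y -> x = y.
Proof.
elim: X => [|z X IH] //= /andP [zX uX]; rewrite cat_uniq => /and3P [_ dis uF].
rewrite !inE => /orP [/eqP -> | xX] /orP [/eqP -> | yX] // ix iy.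
- have H : i \in flatten (map f X) by apply/flatten_mapP; exists y.
  by move: (hasPn dis i H); rewrite /= ix.
- have H : i \in flatten (map f X) by apply/flatten_mapP; exists x.
  by move: (hasPn dis i H); rewrite /= iy.
- exact: IH.
Qed.

Lemma shrink R J Y a b : uniq J -> partitions R J Y -> b \in Y -> is_node R a ->
  {subset leafset R a <= J} -> prefix a b -> a != b ->
  exists Y', partitions R J Y' /\ size Y' < size Y.
Proof.
move=> uJ PY bY na sub ab nab; have PY' := PY; case: PY => [uY [nY pe]].
have uF : uniq (flatten (map (leafset R) Y)) by rewrite (perm_uniq pe).
have nb : is_node R b := allP nY b bY.
set P := prefix a.
have dec : perm_eq (flatten (map (leafset R) (filter P Y)) ++
                    flatten (map (leafset R) (filter (predC P) Y)))
                   (flatten (map (leafset R) Y)).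
  rewrite -flatten_cat -map_cat; apply/perm_flatten/perm_map.
  by rewrite perm_filterC; exact: perm_refl.
have key : perm_eq (flatten (map (leafset R) (filter P Y))) (leafset R a).
  apply: uniq_perm; [|exact: leafset_uniq|].
    by have := uF; rewrite -(perm_uniq dec) cat_uniq => /and3P [].
  move=> i; apply/flatten_mapP/idP.
    move=> [y]; rewrite mem_filter => /andP [ay yY] iy.
    exact: sub_prefix (allP nY y yY) ay _ iy.
  move=> ia; have [y yY iy] := part_cover PY' (sub i ia).
  exists y => //; rewrite mem_filter yY andbT.
  have ny := allP nY y yY.
  case/orP: (inter_prefix na ny ia iy) => // ya.
  case: (eqVneq y a) => [-> | ya']; first exact: prefix_refl.
  exfalso.
  have yb : prefix y b := prefix_trans ya ab.
  have jb : (offset R b).+1 \in leafset R b.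
    by rewrite mem_leafset // ltnSn /= -addn1 leq_add2l sz_gt0.
  have eyb : y = b := flatten_disj uY uF yY bY (sub_prefix nb yb jb) jb.
  subst y; move/negP: nab; apply; apply/eqP; exact: prefix_anti.
have c2 : 1 < count P Y.
  rewrite ltnNge; apply/negP => c1.
  have bF : b \in filter P Y by rewrite mem_filter bY andbT.
  have Ef : filter P Y = [:: b].
    move: c1 bF; rewrite -size_filter; case: (filter P Y) => [|y [|z w]] //=.
    by rewrite inE => _ /eqP ->.
  have := perm_size key; rewrite Ef /= cats0 !size_leafset => E.
  have := strict_sz nb ab nab; lia.
exists (a :: filter (predC P) Y); split.
  split.
    by rewrite /= filter_uniq // andbT mem_filter /= /P prefix_refl.
  split.
    rewrite /= na /=; apply/allP => y; rewrite mem_filter => /andP [_ yY].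
    exact: allP nY y yY.
  rewrite /=; apply: perm_trans pe; apply: perm_trans dec.
  by rewrite perm_cat2r perm_sym.
rewrite /= size_filter -(count_predC P Y) addnC -addn1 ltn_add2l //.
Qed.

Theorem lemma4p4 (n : nat) (R T : btree) (p s a b : seq bool) :
  2 <= n ->
  complete R -> nleaves R = n ->
  nleaves T = n ->
  is_node T p -> is_node T s -> p != s ->
  is_node R a -> is_node R b ->
  in_X R (leafset T p) a -> in_X R (leafset T s) b ->
  anc_eq a b ->
  (anc_eq p s || anc_eq s p) /\ (anc_strict a b -> anc_strict p s).
Proof.
move=> _ _ _ _ np ns pns na nb [X [PX aX _]] [Y [PY bY minY]].
rewrite /anc_eq /anc_strict => ab.
have jb : (offset R b).+1 \in leafset R b.
  by rewrite mem_leafset // ltnSn /= -addn1 leq_add2l sz_gt0.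
have ja := sub_prefix nb ab jb.
have ps := inter_prefix np ns (part_sub PX aX ja) (part_sub PY bY jb).
split => //; case/andP => _ nab; rewrite pns andbT.
case/orP: ps => // sp; exfalso.
have subA : {subset leafset R a <= leafset T s}.
  by move=> i h; exact: sub_prefix np sp _ (part_sub PX aX h).
have [Y' [PY' lt]] := shrink (leafset_uniq T s) PY bY na subA ab nab.
by have := minY Y' PY'; rewrite leqNgt lt.
Qed.
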